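(* Let $n\ge1$, $l\ge0$, and define the subgroup of $\mathrm{Br}_{2n+l}$ $$E_{2n,l}:=\left\langle \sigma_{i,j}^{m_{ij}},\ 1\le i<j\le 2n+l\right\rangle,\quad m_{ij}=\begin{cases}1 & i,j\le l,\ \text{or } i>l,\ i\equiv j\ (2)\\ 2 & i\le l<j\\ 3 & i,j>l,\ i\not\equiv j\ (2).\end{cases}$$ Then $E_{2n,l}$ is also generated by $$\sigma_i\ (i<l),\quad \sigma_{i,i+2}\ (l<i\le 2n+l-2),\quad \sigma_{i,j}^2\ (i\le l<j),\quad \sigma_i^3\ (l<i<2n+l,\ i\not\equiv l\ (2)).$$
   Context: $\mathrm{Br}_N=\langle\sigma_1,\dots,\sigma_{N-1}\mid \sigma_i\sigma_{i+1}\sigma_i=\sigma_{i+1}\sigma_i\sigma_{i+1},\ \sigma_i\sigma_j=\sigma_j\sigma_i\ (|i-j|\ge2)\rangle$; $\sigma_{i,i+1}=\sigma_i$ and $\sigma_{i,j}=\sigma_{j-1}\cdots\sigma_{i+1}\sigma_i\sigma_{i+1}^{-1}\cdots\sigma_{j-1}^{-1}$ for $j>i+1$. *)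

(* Defs.v *)
(* The braid group Br_N is encoded as its
   presentation: words in the letters sigma_i^{+-1} (1 <= i < N), modulo the
   congruence generated by free reduction and the braid relations. *)
From mathcomp Require Import all_boot.
Set Implicit Arguments. Unset Strict Implicit. Unset Printing Implicit Defensive.

(* a letter (i, false) is sigma_i, (i, true) is sigma_i^{-1} *)
Definition letter := (nat * bool)%type.
Definition word := seq letter.

Definition inv_word (w : word) : word := rev (map (fun l => (l.1, ~~ l.2)) w).
Definition gen (i : nat) : word := [:: (i, false)].
Definition wpow (w : word) (m : nat) : word := flatten (nseq m w).

Definition valid_word (N : nat) (w : word) : bool :=
  all (fun l => (1 <= l.1) && (l.1 < N)) w.

Inductive br_eq (N : nat) : word -> word -> Prop :=
| br_refl w : br_eq N w w
| br_sym u v : br_eq N u v -> br_eq N v u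
| br_trans u v w : br_eq N u v -> br_eq N v w -> br_eq N u w
| br_cat u u' v v' : br_eq N u u' -> br_eq N v v' -> br_eq N (u ++ v) (u' ++ v')
| br_free i b : br_eq N [:: (i, b); (i, ~~ b)] [::]
| br_braid i : 1 <= i -> i.+1 < N ->
    br_eq N [:: (i, false); (i.+1, false); (i, false)]
            [:: (i.+1, false); (i, false); (i.+1, false)]
| br_comm i j : 1 <= i -> i.+1 < j -> j < N ->
    br_eq N [:: (i, false); (j, false)] [:: (j, false); (i, false)].

(* sigma_{i,j} = sigma_{j-1} ... sigma_{i+1} sigma_i sigma_{i+1}^{-1} ... sigma_{j-1}^{-1}
   (equal to sigma_i when j = i+1) *)
Definition sigma_ij (i j : nat) : word :=
  let u := [seq (k, false) | k <- rev (iota i.+1 (j - i.+1))] in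
  u ++ gen i ++ inv_word u.

Inductive in_gen (S : word -> Prop) : word -> Prop :=
| gen_nil : in_gen S [::]
| gen_mul s w : S s -> in_gen S w -> in_gen S (s ++ w)
| gen_mulinv s w : S s -> in_gen S w -> in_gen S (inv_word s ++ w).

Definition in_subgroup (N : nat) (S : word -> Prop) (w : word) : Prop :=
  exists2 w', br_eq N w w' & in_gen S w'.

Definition mexp (l i j : nat) : nat :=
  if j <= l then 1
  else if i <= l then 2
  else if odd i == odd j then 1 else 3.

Definition E_gens (n l : nat) (w : word) : Prop :=
  exists i j, [/\ 1 <= i, i < j, j <= 2 * n + l & w = wpow (sigma_ij i j) (mexp l i j)].

Definition E_gens' (n l : nat) (w : word) : Prop :=
  [\/ exists i, [/\ 1 <= i, i < l & w = gen i],
      exists i, [/\ l < i, i <= 2 * n + l - 2 & w = sigma_ij i i.+2],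
      exists i j, [/\ 1 <= i, i <= l, l < j, j <= 2 * n + l & w = wpow (sigma_ij i j) 2]
    | exists i, [/\ l < i, i < 2 * n + l, odd i != odd l & w = wpow (gen i) 3]].

(* Main.v *)
Require Import Defs.
From mathcomp Require Import all_boot.
From mathcomp Require Import zify.
From Stdlib Require Import Setoid Morphisms.

#[export] Instance br_equiv N : Equivalence (br_eq N).
Proof. split; [exact: br_refl|exact: br_sym|exact: br_trans]. Qed.
#[export] Instance br_cat_proper N : Proper (br_eq N ==> br_eq N ==> br_eq N) cat.
Proof. move=> ? ? ? ? ? ?; exact: br_cat. Qed.

#[export] Hint Resolve br_refl : core.

Lemma inv_word_cat u v : inv_word (u ++ v) = inv_word v ++ inv_word u.
Proof. by rewrite /inv_word map_cat rev_cat. Qed.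

Lemma inv_wordK w : inv_word (inv_word w) = w.
Proof.
elim: w => // [[k b] w IH].
rewrite -cat1s !inv_word_cat IH /= negbK //.
Qed.

Lemma cancel_r N w : br_eq N (w ++ inv_word w) [::].
Proof.
elim: w => [|[k b] w IH]; first reflexivity.
rewrite -cat1s inv_word_cat -catA (catA w) IH /=.
exact: br_free.
Qed.

Lemma cancel_l N w : br_eq N (inv_word w ++ w) [::].
Proof. by have := cancel_r N (inv_word w); rewrite inv_wordK. Qed.

Lemma wpowS w m : wpow w m.+1 = w ++ wpow w m.
Proof. by []. Qed.

Lemma wpow_conj N c x m :
  br_eq N (wpow (c ++ x ++ inv_word c) m) (c ++ wpow x m ++ inv_word c).
Proof.
elim: m => [|m IH].
  rewrite (_ : wpow x 0 = [::]) // cat0s; symmetry; exact: cancel_r.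
rewrite wpowS IH !wpowS -!catA (catA (inv_word c)) cancel_l /=; reflexivity.
Qed.

Lemma wpow_cong N u v m : br_eq N u v -> br_eq N (wpow u m) (wpow v m).
Proof.
move=> H; elim: m => [|m IH]; first reflexivity.
rewrite !wpowS; exact: br_cat H IH.
Qed.

Lemma in_gen_cat S u v : in_gen S u -> in_gen S v -> in_gen S (u ++ v).
Proof.
move=> Hu Hv; elim: Hu => [|s w Ss _ IH|s w Ss _ IH] //; rewrite -catA.
  exact: gen_mul.
exact: gen_mulinv.
Qed.

Lemma in_gen_inv S u : in_gen S u -> in_gen S (inv_word u).
Proof.
elim=> [|s w Ss _ IH|s w Ss _ IH]; first exact: gen_nil.
  rewrite inv_word_cat; apply: in_gen_cat => //.
  rewrite -(cats0 (inv_word s)); apply: gen_mulinv => //; exact: gen_nil.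
rewrite inv_word_cat inv_wordK; apply: in_gen_cat => //.
rewrite -(cats0 s); apply: gen_mul => //; exact: gen_nil.
Qed.

Lemma sub_eq N S w w' : br_eq N w w' -> in_subgroup N S w' -> in_subgroup N S w.
Proof. move=> H [v Hv Gv]; exists v => //; exact: br_trans H Hv. Qed.

Lemma sub_cat N S u v : in_subgroup N S u -> in_subgroup N S v ->
  in_subgroup N S (u ++ v).
Proof.
move=> [u' Hu Gu] [v' Hv Gv]; exists (u' ++ v'); first exact: br_cat.
exact: in_gen_cat.
Qed.

Lemma inv_cong N u v : br_eq N u v -> br_eq N (inv_word u) (inv_word v).
Proof.
move=> H.
transitivity (inv_word u ++ (v ++ inv_word v)).
  by rewrite (cancel_r N v) cats0.
by rewrite -{1}H catA (cancel_l N u).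
Qed.

Lemma sub_inv N S u : in_subgroup N S u -> in_subgroup N S (inv_word u).
Proof.
move=> [u' Hu Gu]; exists (inv_word u'); first exact: inv_cong.
exact: in_gen_inv.
Qed.

Lemma sub_gen N (S : word -> Prop) s : S s -> in_subgroup N S s.
Proof.
move=> Ss; exists s; first reflexivity.
rewrite -(cats0 s); apply: gen_mul => //; exact: gen_nil.
Qed.

Lemma sub_nil N S : in_subgroup N S [::].
Proof. exists [::]; [reflexivity | exact: gen_nil]. Qed.

Lemma sub_mono N (S T : word -> Prop) w :
  (forall s, S s -> in_subgroup N T s) -> in_subgroup N S w -> in_subgroup N T w.
Proof.
move=> HST [w' Hw Gw]; apply: (sub_eq _ _ _ _ Hw).
elim: Gw => [|s v Ss _ IH|s v Ss _ IH]; first exact: sub_nil.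
  by apply: sub_cat => //; apply: HST.
by apply: sub_cat => //; apply: sub_inv; apply: HST.
Qed.

Lemma freeT N k : br_eq N [:: (k,true); (k,false)] [::].
Proof. exact: (br_free N k true). Qed.
Lemma freeF N k : br_eq N [:: (k,false); (k,true)] [::].
Proof. exact: (br_free N k false). Qed.

Lemma sigma_1 i : sigma_ij i i.+1 = gen i.
Proof. by rewrite /sigma_ij subnn. Qed.

Lemma sigma_2 j : sigma_ij j j.+2 = [:: (j.+1, false); (j, false); (j.+1, true)].
Proof. by rewrite /sigma_ij (_ : j.+2 - j.+1 = 1) //; lia. Qed.

Lemma sigma_step i j : i < j ->
  sigma_ij i j.+2 = [:: (j.+1,false); (j,false)] ++ sigma_ij i j ++ [:: (j,true); (j.+1,true)].
Proof.
move=> lt_ij; rewrite /sigma_ij.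
have -> : j.+2 - i.+1 = (j - i.+1) + 2 by lia.
rewrite iotaD rev_cat.
have -> : i.+1 + (j - i.+1) = j by lia.
rewrite map_cat !inv_word_cat /= -!catA //.
Qed.

Lemma sigma_letters i j : i < j ->
  all (fun a : letter => (i <= a.1) && (a.1 < j)) (sigma_ij i j).
Proof.
move=> lt_ij; apply/allP => a; rewrite /sigma_ij /inv_word !mem_cat.
have Hu : forall a : letter,
  a \in [seq (k, false) | k <- rev (iota i.+1 (j - i.+1))] -> (i <= a.1) && (a.1 < j).
  move=> b /mapP [k]; rewrite mem_rev mem_iota => /andP [H1 H2] ->/=; apply/andP; lia.
case/or3P.
- exact: Hu.
- by rewrite mem_seq1 => /eqP -> /=; apply/andP; lia.
- rewrite mem_rev => /mapP [b /Hu Hb ->] //.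
Qed.

Lemma comm_letter N k b m : 1 <= k -> k.+1 < m -> m < N ->
  br_eq N [:: (k,b); (m,false)] [:: (m,false); (k,b)].
Proof.
move=> H1 H2 H3; case: b; last exact: br_comm.
transitivity ([:: (k,true); (m,false)] ++ [:: (k,false); (k,true)]).
  by rewrite (freeF N k) cats0.
rewrite (_ : _ ++ _ = [:: (k,true)] ++ [:: (m,false); (k,false)] ++ [:: (k,true)]) //.
rewrite -(br_comm H1 H2 H3) (_ : _ ++ _ = [:: (k,true);(k,false)] ++ [:: (m,false);(k,true)]) // (freeT N k) //.
Qed.

Lemma comm_word N m w : m < N ->
  all (fun a : letter => (1 <= a.1) && (a.1.+1 < m)) w ->
  br_eq N (w ++ [:: (m,false)]) ([:: (m,false)] ++ w).
Proof.
move=> HmN; elim: w => [|[k b] w IH] /=; first reflexivity.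
case/andP=> /andP [H1 H2] /IH Hw.
transitivity ([:: (k,b)] ++ ([:: (m,false)] ++ w)); first exact: (br_cat (br_refl _ [:: (k,b)]) Hw).
exact: (br_cat (comm_letter N k b m H1 H2 HmN) (br_refl _ w)).
Qed.

Lemma step_eq N i j : 1 <= i -> i < j -> j.+2 <= N ->
  br_eq N (sigma_ij i j.+2) (sigma_ij j j.+2 ++ sigma_ij i j ++ inv_word (sigma_ij j j.+2)).
Proof.
move=> H1 H2 H3; rewrite sigma_step // sigma_2 /=.
have Hc : br_eq N (sigma_ij i j ++ [:: (j.+1,false)]) ([:: (j.+1,false)] ++ sigma_ij i j).
  apply: comm_word; first lia.
  apply: sub_all (sigma_letters i j H2) => a /andP [a1 a2]; apply/andP; lia.
set X := sigma_ij i j.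
rewrite (_ : inv_word _ = [:: (j.+1, false); (j, true); (j.+1, true)]) //.
symmetry.
transitivity ([:: (j.+1, false); (j, false)] ++ [:: (j.+1, true)] ++ (X ++ [:: (j.+1, false)])
   ++ [:: (j, true); (j.+1, true)]).
  by rewrite -!catA.
rewrite Hc.
transitivity ([:: (j.+1, false); (j, false)] ++ [:: (j.+1, true); (j.+1, false)] ++ X
   ++ [:: (j, true); (j.+1, true)]).
  by rewrite -!catA.
by rewrite (freeT N j.+1).
Qed.

Lemma cube_conj N b : 1 <= b -> b.+2 <= N ->
  br_eq N (gen b.+1) (inv_word (sigma_ij b b.+2) ++ gen b ++ sigma_ij b b.+2).
Proof.
move=> H1 H2; rewrite sigma_2 /=.
rewrite (_ : [:: (b.+1, false), (b, true), (b.+1, true), (b, false), (b.+1, false), (b, false) & _] =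
  [:: (b.+1, false); (b, true); (b.+1, true)] ++ [:: (b, false); (b.+1, false); (b, false)]
  ++ [:: (b.+1, true)]) //.
rewrite (br_braid H1) //.
rewrite (_ : _ ++ _ = [:: (b.+1, false); (b, true)] ++ [:: (b.+1, true); (b.+1, false)]
  ++ [:: (b, false); (b.+1, false); (b.+1, true)]) //.
rewrite (freeT N b.+1) /=.
rewrite (_ : [:: _, _, _, _ & _] = [:: (b.+1, false)] ++ [:: (b, true); (b, false)]
  ++ [:: (b.+1, false); (b.+1, true)]) //.
by rewrite (freeT N b) (freeF N b.+1).
Qed.

Lemma wpow1 w : wpow w 1 = w.
Proof. by rewrite /wpow /= cats0. Qed.

Lemma gens'_in_E n l s : E_gens' n l s -> in_subgroup (2 * n + l) (E_gens n l) s.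
Proof.
case=> [[i [H1 H2 ->]]|[i [H1 H2 ->]]|[i [j [H1 H2 H3 H4 ->]]]|[i [H1 H2 H3 ->]]];
  apply: sub_gen.
- exists i, i.+1; split => //; first lia.
  by rewrite /mexp H2 wpow1 sigma_1.
- exists i, i.+2; split => //; try lia.
  rewrite /mexp ifF; last lia.
  rewrite ifF; last lia.
  by rewrite /= negbK eqxx wpow1.
- exists i, j; split => //; try lia.
  by rewrite /mexp ifF ?H2 //; lia.
- exists i, i.+1; split => //; try lia.
  rewrite /mexp ifF; last lia.
  rewrite ifF; last lia.
  by rewrite /= sigma_1; case: (odd i).
Qed.

Lemma letters_in_E' n l w :
  all (fun a : letter => (1 <= a.1) && (a.1 < l)) w ->
  in_subgroup (2 * n + l) (E_gens' n l) w.
Proof.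
elim: w => [|[k b] w IH]; first by move=> _; exact: sub_nil.
rewrite [all _ _]/= => /andP [/andP [H1 H2] /IH Hw].
rewrite -cat1s; apply: sub_cat => //.
case: b.
- rewrite (_ : [:: (k, true)] = inv_word (gen k)) //; apply: sub_inv; apply: sub_gen.
  by apply: Or41; exists k.
- by apply: sub_gen; apply: Or41; exists k.
Qed.

Lemma cube_in_E' n l a : l < a -> a < 2 * n + l ->
  in_subgroup (2 * n + l) (E_gens' n l) (wpow (gen a) 3).
Proof.
move=> H1 H2.
case Ho: (odd a != odd l).
  by apply: sub_gen; apply: Or44; exists a.
move/negbFE/eqP: Ho => Ho.
case: a H1 H2 Ho => [|b] H1 H2 Ho; first lia.
have Hb : l < b.
  have : l != b by apply/eqP => E; move: Ho; rewrite E /=; case: (odd b).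
  lia.
have Hb2 : b.+2 <= 2 * n + l by lia.
have Hb1 : 1 <= b by lia.
apply: (sub_eq _ _ _ _ (wpow_cong _ _ _ 3 (cube_conj _ b Hb1 Hb2))).
rewrite -{2}(inv_wordK (sigma_ij b b.+2)).
apply: (sub_eq _ _ _ _ (wpow_conj _ _ _ 3)).
rewrite inv_wordK; apply: sub_cat; first by apply: sub_inv; apply: sub_gen; apply: Or42; exists b; split => //; lia.
apply: sub_cat; last by apply: sub_gen; apply: Or42; exists b; split => //; lia.
apply: sub_gen; apply: Or44; exists b; split => //; first lia.
by move: Ho => /=; case: (odd b); case: (odd l).
Qed.

Lemma upper_in_E' n l : forall d i, l < i -> i + d.+1 <= 2 * n + l ->
  in_subgroup (2 * n + l) (E_gens' n l) (wpow (sigma_ij i (i + d.+1)) (mexp l i (i + d.+1))).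
Proof.
suff H : forall d, (forall i, l < i -> i + d.+1 <= 2 * n + l ->
  in_subgroup (2 * n + l) (E_gens' n l) (wpow (sigma_ij i (i + d.+1)) (mexp l i (i + d.+1))))
  /\ (forall i, l < i -> i + d.+2 <= 2 * n + l ->
  in_subgroup (2 * n + l) (E_gens' n l) (wpow (sigma_ij i (i + d.+2)) (mexp l i (i + d.+2)))).
  by move=> d; case: (H d).
elim=> [|d [IH1 IH2]]; split.
- move=> i H1 H2; rewrite addn1 /mexp ifF; last lia.
  rewrite ifF; last lia.
  rewrite /= sigma_1 (_ : (odd i == ~~ odd i) = false); last by case: (odd i).
  apply: cube_in_E'; lia.
- move=> i H1 H2; rewrite addn2 /mexp ifF; last lia.
  rewrite ifF; last lia.
  rewrite /= negbK eqxx wpow1; apply: sub_gen; apply: Or42; exists i; split => //; lia.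
- exact: IH2.
- move=> i H1 H2.
  have -> : i + d.+3 = (i + d.+1).+2 by lia.
  have IHj : in_subgroup (2 * n + l) (E_gens' n l)
      (wpow (sigma_ij i (i + d.+1)) (mexp l i (i + d.+1))) by apply: IH1; lia.
  have Hj1 : i < i + d.+1 by lia.
  have Hj2 : (i + d.+1).+2 <= 2 * n + l by lia.
  have Hlj : l < i + d.+1 by lia.
  move: IHj Hj1 Hj2 Hlj; move: (i + d.+1) => j IHj Hj1 Hj2 Hlj.
  have -> : mexp l i j.+2 = mexp l i j.
    have e1 : (j.+2 <= l) = false by lia.
    have e2 : (j <= l) = false by lia.
    have e3 : (i <= l) = false by lia.
    by rewrite /mexp e1 e2 e3 /= !negbK.
  apply: (sub_eq _ _ _ _ (wpow_cong _ _ _ _ (step_eq _ i j ltac:(lia) Hj1 Hj2))).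
  apply: (sub_eq _ _ _ _ (wpow_conj _ _ _ _)).
  have Hc : in_subgroup (2 * n + l) (E_gens' n l) (sigma_ij j j.+2).
    by apply: sub_gen; apply: Or42; exists j; split => //; lia.
  apply: sub_cat => //; apply: sub_cat => //; exact: sub_inv.
Qed.

Lemma gens_in_E' n l s : E_gens n l s -> in_subgroup (2 * n + l) (E_gens' n l) s.
Proof.
case=> i [j [H1 H2 H3 ->]].
case: (leqP j l) => Hjl.
  rewrite /mexp Hjl wpow1; apply: letters_in_E'.
  apply: sub_all (sigma_letters i j H2) => a /andP [a1 a2]; apply/andP; lia.
case: (leqP i l) => Hil.
  apply: sub_gen; apply: Or43; exists i, j; split => //.
  by rewrite /mexp ifF ?Hil //; lia.
have -> : j = i + (j - i.+1).+1 by lia.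
apply: upper_in_E'; lia.
Qed.

Theorem mainTheorem15 (n l : nat) (hn : 1 <= n) (w : word) :
  valid_word (2 * n + l) w ->
  (in_subgroup (2 * n + l) (E_gens n l) w <->
   in_subgroup (2 * n + l) (E_gens' n l) w).
Proof.
move=> _; split; apply: sub_mono.
- exact: gens_in_E'.
- exact: gens'_in_E.
Qed.
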